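(* Let $G$ be a graph, let $A,B\subseteq V(G)$ be disjoint independent sets in $G$ each of size at least two, and let $v\in V(G)\setminus(A\cup B)$. Assume that every $a\in A$ has at least one neighbour and at least one non-neighbour in $B$, and every $b\in B$ has at least one neighbour and at least one non-neighbour in $A$. Then one can admissibly remove from $G$ a subset of $A\cup B\cup\{v\}$ which contains $v$ and contains at most two vertices of $A$ and at most two vertices of $B$.
   Context: Removing a set $T$ of vertices from a graph $G$ is a simple admissible removal if $T$ is an independent set in $G$ and the number of edges between $T$ and $V(G)\setminus T$ is even. Removing a (not necessarily independent) set of vertices is admissible if it can be realised by a sequence of simple admissible removals, each performed in the graph remaining after the previous ones. Degrees are always taken in the current remaining graph. *)

(* Defs.v *)
From mathcomp Require Import all_boot.
Set Implicit Arguments. Unset Strict Implicit. Unset Printing Implicit Defensive.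

(* The "current
   remaining graph" is the induced subgraph on a vertex set R : {set V}. *)

Definition independent (V : finType) (e : rel V) (T : {set V}) : Prop :=
  forall x y, x \in T -> y \in T -> ~~ e x y.

(* number of edges between T and U (T, U disjoint: each edge counted once) *)
Definition n_edges_between (V : finType) (e : rel V) (T U : {set V}) : nat :=
  #|[set p : V * V | [&& p.1 \in T, p.2 \in U & e p.1 p.2]]|.

Definition simple_admissible (V : finType) (e : rel V) (R T : {set V}) : Prop :=
  [/\ T \subset R, independent e T & ~~ odd (n_edges_between e T (R :\: T))].

Inductive admissible (V : finType) (e : rel V) : {set V} -> {set V} -> Prop :=
| adm_nil : forall R, admissible e R set0
| adm_step : forall R T S, simple_admissible e R T ->
    admissible e (R :\: T) S -> admissible e R (T :|: S).

(* Main.v *)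
Require Import Defs.
From mathcomp Require Import all_boot.
Set Implicit Arguments. Unset Strict Implicit. Unset Printing Implicit Defensive.

Definition nb (V : finType) (e : rel V) (x : V) : {set V} := [set y | e x y].
Definition deg (V : finType) (e : rel V) (R : {set V}) (x : V) := #|R :&: nb e x|.

Lemma nedges_sum (V : finType) (e : rel V) (T U : {set V}) :
  n_edges_between e T U = \sum_(t in T) #|U :&: nb e t|.
Proof.
rewrite /n_edges_between -sum1_card.
have -> : \sum_(t in T) #|U :&: nb e t| = \sum_(t in T) \sum_(j in U) (e t j : nat).
  apply: eq_bigr => t _; rewrite -sum1_card big_mkcond /= [RHS]big_mkcond /=.
  by apply: eq_bigr => j _; rewrite !inE; case: (j \in U); case: (e t j).
rewrite pair_big /= big_mkcond /= [RHS]big_mkcond /=.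
apply: eq_bigr => [[x y]] _ /=; rewrite !inE /=.
by case: (x \in T); case: (y \in U); case: (e x y).
Qed.

Lemma deg_del1 (V : finType) (e : rel V) (R : {set V}) x y :
  x \in R -> deg e R y = deg e (R :\ x) y + e y x.
Proof.
move=> xR; rewrite /deg (cardsD1 x (R :&: nb e y)) addnC.
have -> : (R :\ x) :&: nb e y = (R :&: nb e y) :\ x.
  by apply/setP=> z; rewrite !inE; case: (z == x).
by rewrite !inE xR.
Qed.

Lemma odd_del1 (V : finType) (e : rel V) (R : {set V}) x y :
  x \in R -> odd (deg e R y) = odd (deg e (R :\ x) y) (+) e y x.
Proof. by move=> xR; rewrite (deg_del1 e y xR) oddD; case: (e y x). Qed.

Lemma sa1 (V : finType) (e : rel V) (e_irr : irreflexive e) (R : {set V}) x :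
  x \in R -> ~~ odd (deg e R x) -> simple_admissible e R [set x].
Proof.
move=> xR ev; split.
- by rewrite sub1set.
- by move=> a b; rewrite !inE => /eqP-> /eqP->; rewrite e_irr.
- rewrite nedges_sum big_set1 -/(deg e (R :\ x) x).
  by move: ev; rewrite (deg_del1 e x xR) e_irr addn0.
Qed.

Lemma sa2 (V : finType) (e : rel V) (e_sym : symmetric e) (e_irr : irreflexive e) (R : {set V}) x y :
  x \in R -> y \in R -> x != y -> ~~ e x y ->
  odd (deg e R x) = odd (deg e R y) -> simple_admissible e R [set x; y].
Proof.
move=> xR yR xy nxy hp; split.
- by apply/subsetP=> z; rewrite !inE => /orP[]/eqP->.
- move=> a b; rewrite !inE => /orP[]/eqP-> /orP[]/eqP->;
    by rewrite ?e_irr // e_sym.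
- have yR' : y \in R :\ x by rewrite !inE eq_sym xy.
  have eR : R :\: [set x; y] = (R :\ x) :\ y.
    by apply/setP=> z; rewrite !inE; case: (z == x); case: (z == y).
  rewrite nedges_sum big_setU1 /=; last by rewrite inE.
  rewrite big_set1 eR -/(deg e (R :\ x :\ y) x) -/(deg e (R :\ x :\ y) y).
  have hx : deg e R x = deg e (R :\ x :\ y) x.
    by rewrite (deg_del1 e x xR) (deg_del1 e x yR') e_irr (negbTE nxy) !addn0.
  have hy : deg e R y = deg e (R :\ x :\ y) y.
    by rewrite (deg_del1 e y xR) (deg_del1 e y yR') e_irr e_sym (negbTE nxy) !addn0.
  by rewrite -hx -hy oddD hp addbb.
Qed.

Lemma sub_card (V : finType) (S A P W : {set V}) :
  S \subset P :|: W -> (forall z, z \in W -> z \notin A) -> #|P| <= 2 -> #|S :&: A| <= 2.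
Proof.
move=> hS hW hP; apply: leq_trans hP; apply: subset_leq_card.
apply/subsetP=> z; rewrite inE => /andP[zS zA]; move: (subsetP hS z zS).
rewrite inE => /orP[] // zW; by rewrite (negbTE (hW z zW)) in zA.
Qed.

Lemma adm1 (V : finType) (e : rel V) (R T : {set V}) : simple_admissible e R T -> admissible e R T.
Proof. by move=> H; rewrite -[T]setU0; apply: adm_step H (adm_nil _ _). Qed.

Unset Implicit Arguments.
Theorem mainTheorem7 (V : finType) (e : rel V)
  (e_sym : symmetric e) (e_irr : irreflexive e)
  (A B : {set V}) (v : V) :
  [disjoint A & B] ->
  independent e A -> independent e B ->
  1 < #|A| -> 1 < #|B| ->
  v \notin A :|: B ->
  (forall a, a \in A -> (exists2 b, b \in B & e a b) /\ (exists2 b, b \in B & ~~ e a b)) ->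
  (forall b, b \in B -> (exists2 a, a \in A & e b a) /\ (exists2 a, a \in A & ~~ e b a)) ->
  exists S : {set V},
    [/\ S \subset A :|: B :|: [set v], v \in S,
        #|S :&: A| <= 2, #|S :&: B| <= 2 & admissible e [set: V] S].
Proof.
move=> dAB iA iB cA cB vAB hA hB.
have vA : v \notin A by move: vAB; rewrite inE negb_or => /andP[].
have vB : v \notin B by move: vAB; rewrite inE negb_or => /andP[].
have vne : forall x, x \in A :|: B -> x != v.
  by move=> x xAB; apply/eqP=> ev; rewrite -ev xAB in vAB.
have vT : v \in [set: V] by rewrite inE.
case: (boolP (odd (deg e [set: V] v))) => dv; last first.
  exists [set v]; split.
  - by rewrite sub1set !inE eqxx orbT.
  - by rewrite inE.
  - apply: (@sub_card _ _ _ set0 [set v]); rewrite ?cards0 ?set0U ?subxx //.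
    by move=> z; rewrite inE => /eqP->.
  - apply: (@sub_card _ _ _ set0 [set v]); rewrite ?cards0 ?set0U ?subxx //.
    by move=> z; rewrite inE => /eqP->.
  - by apply: adm1; apply: (sa1 e_irr).
have [x Hx | H1] := pickP [pred x | (x \in A :|: B) && ~~ e v x && odd (deg e [set: V] x)].
  move: Hx => /= /andP[/andP[xAB nvx] dx].
  have xv := vne x xAB.
  exists [set v; x]; split.
  - apply/subsetP=> z; rewrite !inE => /orP[]/eqP->; rewrite ?eqxx ?orbT //.
    by rewrite !inE in xAB; rewrite xAB.
  - by rewrite !inE eqxx.
  - apply: (@sub_card _ _ _ [set x] [set v]); rewrite ?cards1 //.
      by apply/subsetP=> z; rewrite !inE orbC.
    by move=> z; rewrite inE => /eqP->.
  - apply: (@sub_card _ _ _ [set x] [set v]); rewrite ?cards1 //.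
      by apply/subsetP=> z; rewrite !inE orbC.
    by move=> z; rewrite inE => /eqP->.
  - apply: adm1; apply: (sa2 e_sym e_irr); rewrite ?inE ?dv ?dx // eq_sym //.
have [x Hx | H2] := pickP [pred x | (x \in A :|: B) && e v x && ~~ odd (deg e [set: V] x)].
  move: Hx => /= /andP[/andP[xAB evx] dx].
  have xv := vne x xAB.
  exists ([set x] :|: [set v]); split.
  - apply/subsetP=> z; rewrite !inE; repeat case/orP; try by [];
      move/eqP->; rewrite ?eqxx ?orbT //.
    by rewrite !inE in xAB; rewrite xAB.
  - by rewrite !inE eqxx orbT.
  - apply: (@sub_card _ _ _ [set x] [set v]); rewrite ?cards1 ?subxx //.
    by move=> z; rewrite inE => /eqP->.
  - apply: (@sub_card _ _ _ [set x] [set v]); rewrite ?cards1 ?subxx //.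
    by move=> z; rewrite inE => /eqP->.
  - apply: adm_step; first by apply: (sa1 e_irr); rewrite ?inE.
    apply: adm1; apply: (sa1 e_irr); first by rewrite !inE eq_sym xv.
    by move: dv; rewrite (odd_del1 e v (in_setT x)) evx addbT.
have [x Hx | H3] := pickP [pred x | (x \in A :|: B) && ~~ e v x].
  move: Hx => /= /andP[xAB nvx].
  have xv := vne x xAB.
  have dx : ~~ odd (deg e [set: V] x).
    by move: (H1 x) => /=; rewrite xAB nvx /= => ->.
  have [y yAB exy] : exists2 y, y \in A :|: B & e x y.
    move: (xAB); rewrite inE => /orP[] xA.
      by have [[y yB eyx] _] := hA x xA; exists y; rewrite // inE yB orbT.
    by have [[y yA eyx] _] := hB x xA; exists y; rewrite // inE yA.
  have yv := vne y yAB.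
  have yx : y != x by apply/eqP=> eyx; rewrite eyx e_irr in exy.
  have yR1 : y \in [set: V] :\ x by rewrite !inE yx.
  have vR1 : v \in [set: V] :\ x by rewrite !inE eq_sym xv.
  have dy1 : odd (deg e [set: V] y) = ~~ odd (deg e ([set: V] :\ x) y).
    by rewrite (odd_del1 e y (in_setT x)) e_sym exy addbT.
  have dv1 : odd (deg e ([set: V] :\ x) v).
    by move: dv; rewrite (odd_del1 e v (in_setT x)) (negbTE nvx) addbF.
  case: (boolP (e v y)) => evy.
    have dy : odd (deg e [set: V] y).
      by move: (H2 y) => /=; rewrite yAB evy /= => /negbFE.
    exists ([set x] :|: ([set y] :|: [set v])); split.
    - apply/subsetP=> z; rewrite !inE; repeat case/orP; try by [];
        move/eqP->; rewrite ?eqxx ?orbT //.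
      + by rewrite !inE in xAB; rewrite xAB.
      + by rewrite !inE in yAB; rewrite yAB.
    - by rewrite !inE eqxx !orbT.
    - apply: (@sub_card _ _ _ [set x; y] [set v]).
      + by apply/subsetP=> z; rewrite !inE; case: (z == x); case: (z == y); case: (z == v).
      + by move=> z; rewrite inE => /eqP->.
      + by rewrite cards2; case: (_ != _).
    - apply: (@sub_card _ _ _ [set x; y] [set v]).
      + by apply/subsetP=> z; rewrite !inE; case: (z == x); case: (z == y); case: (z == v).
      + by move=> z; rewrite inE => /eqP->.
      + by rewrite cards2; case: (_ != _).
    - apply: adm_step; first by apply: (sa1 e_irr); rewrite ?inE.
      apply: adm_step; first by apply: (sa1 e_irr) => //; rewrite -dy1.
      apply: adm1; apply: (sa1 e_irr); first by rewrite !inE eq_sym yv eq_sym xv.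
      by move: dv1; rewrite (odd_del1 e v yR1) evy addbT.
  have dy : ~~ odd (deg e [set: V] y).
    by move: (H1 y) => /=; rewrite yAB evy /= => ->.
  exists ([set x] :|: [set v; y]); split.
  - apply/subsetP=> z; rewrite !inE; repeat case/orP; try by [];
      move/eqP->; rewrite ?eqxx ?orbT //.
    + by rewrite !inE in xAB; rewrite xAB.
    + by rewrite !inE in yAB; rewrite yAB.
  - by rewrite !inE eqxx !orbT.
  - apply: (@sub_card _ _ _ [set x; y] [set v]).
    + by apply/subsetP=> z; rewrite !inE; case: (z == x); case: (z == y); case: (z == v).
    + by move=> z; rewrite inE => /eqP->.
    + by rewrite cards2; case: (_ != _).
  - apply: (@sub_card _ _ _ [set x; y] [set v]).
    + by apply/subsetP=> z; rewrite !inE; case: (z == x); case: (z == y); case: (z == v).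
    + by move=> z; rewrite inE => /eqP->.
    + by rewrite cards2; case: (_ != _).
  - apply: adm_step; first by apply: (sa1 e_irr); rewrite ?inE.
    apply: adm1; apply: (sa2 e_sym e_irr) => //; first by rewrite eq_sym.
    by rewrite dv1; move: dy; rewrite dy1 negbK => ->.
have adj : forall x, x \in A :|: B -> e v x.
  by move=> x xAB; move: (H3 x) => /=; rewrite xAB /= => /negbFE.
have odx : forall x, x \in A :|: B -> odd (deg e [set: V] x).
  by move=> x xAB; move: (H2 x) => /=; rewrite xAB adj //= => /negbFE.
have [a aA] : exists a, a \in A by apply/card_gt0P; apply: ltnW.
have [_ [b bB nab]] := hA a aA.
have [[a' a'A eba'] _] := hB b bB.
have aAB : a \in A :|: B by rewrite inE aA.
have bAB : b \in A :|: B by rewrite inE bB orbT.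
have a'AB : a' \in A :|: B by rewrite inE a'A.
have ba : b != a by apply/eqP=> h; rewrite h (disjointFr dAB aA) in bB.
have a'b : a' != b by apply/eqP=> h; rewrite -h (disjointFr dAB a'A) in bB.
have a'a : a' != a by apply/eqP=> h; rewrite -h e_sym eba' in nab.
have eR1 : [set: V] :\: [set a; b] = [set: V] :\ a :\ b.
  by apply/setP=> z; rewrite !inE; case: (z == a); case: (z == b).
have bR : b \in [set: V] :\ a by rewrite !inE ba.
exists ([set a; b] :|: ([set a'] :|: [set v])); split.
- apply/subsetP=> z; rewrite !inE; repeat case/orP; try by [];
    move/eqP->; rewrite ?eqxx ?aA ?bB ?a'A ?orbT //.
- by rewrite !inE eqxx !orbT.
- apply: (@sub_card _ _ _ [set a; a'] [set v; b]); last by rewrite cards2; case: (_ != _).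
  + by apply/subsetP=> z; rewrite !inE; case: (z == a); case: (z == b);
      case: (z == v); case: (z == a').
  + by move=> z; rewrite !inE => /orP[]/eqP->; rewrite ?vA ?(disjointFl dAB bB).
- apply: (@sub_card _ _ _ [set b] [set v; a; a']); last by rewrite cards1.
  + by apply/subsetP=> z; rewrite !inE; case: (z == a); case: (z == b);
      case: (z == v); case: (z == a').
  + move=> z; rewrite !inE => /orP[/orP[]|]/eqP->;
      by rewrite ?vB ?(disjointFr dAB aA) ?(disjointFr dAB a'A).
- apply: adm_step.
    apply: (sa2 e_sym e_irr); rewrite ?inE //; first by rewrite eq_sym.
    by rewrite !odx.
  rewrite eR1; apply: adm_step.
    apply: (sa1 e_irr); first by rewrite !inE a'b a'a.
    move: (odx a' a'AB).
    rewrite (odd_del1 e a' (in_setT a)) (odd_del1 e a' bR) e_sym eba'.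
    by rewrite (negbTE (iA a' a a'A aA)) /= addbT addbF.
  apply: adm1; apply: (sa1 e_irr).
    by rewrite !inE eq_sym (vne a' a'AB) eq_sym (vne b bAB) eq_sym (vne a aAB).
  have a'R : a' \in [set: V] :\ a :\ b by rewrite !inE a'b a'a.
  move: dv.
  rewrite (odd_del1 e v (in_setT a)) (odd_del1 e v bR) (odd_del1 e v a'R).
  by rewrite !adj // !addbT negbK.
Qed.
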